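(* Let $G$ be a graph. Then $\varphi_r(G-v)=\varphi_r(G)+\lfloor |V(G)|/2\rfloor-2$ for every vertex $v\in V(G)$ if and only if one of the following holds: (i) $G$ is $P_2$ or $C_3$; (ii) $E(G)=\emptyset$ and $4\le|V(G)|\le5$; (iii) $4\le |V(G)|\le 5$ and $G$ contains two edges with no common endpoint but contains no induced b-$3$-atom.
   Context: $P_2$ is the path on two vertices (a single edge) and $C_3$ the triangle. A proper $k$-coloring of $G$ is a surjective map $c:V(G)\to\{1,\ldots,k\}$ with $c(u)\ne c(v)$ for every edge $uv$. In a proper $k$-coloring, a vertex of color $i$ is a b-vertex if it has a neighbor of every color $j\ne i$. A b-$k$-coloring is a proper $k$-coloring in which every color class contains a b-vertex; $\varphi(G)$ is the largest $k$ such that $G$ has a b-$k$-coloring, and $\varphi_r(G)=\max\{\varphi(H): H\text{ an induced subgraph of }G\}$. A b-$t$-atom is a graph $A$ whose vertex set can be partitioned into $t$ sets $D_1,\ldots,D_t$, each $D_i$ containing a special vertex $c_i$, such that each $D_i$ is independent with $|D_i|\le t$ and, for all $i\ne j$, $c_i$ has a neighbor in $D_j$. *)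

(* Defs.v *)
(* Simple graphs: vertex finType T with a symmetric,
   irreflexive adjacency relation e : rel T. Induced subgraphs are given
   by vertex subsets S : {set T}. Colors are 0..k-1 (instead of 1..k). *)
From HB Require Import structures.
From mathcomp Require Import all_boot all_order all_algebra.
From Stdlib Require Import ClassicalDescription.
Set Implicit Arguments. Unset Strict Implicit. Unset Printing Implicit Defensive.

Section Graphs.
Variables (T : finType) (e : rel T).

(* c is a proper k-coloring of the induced subgraph G[S]
   (values of c outside S are irrelevant) *)
Definition proper_coloring (S : {set T}) (k : nat) (c : T -> nat) : Prop :=
  [/\ (forall x, x \in S -> c x < k),
      (forall j, j < k -> exists2 x, x \in S & c x = j) &
      (forall x y, x \in S -> y \in S -> e x y -> c x <> c y)].

Definition b_vertex (S : {set T}) (k : nat) (c : T -> nat) (x : T) : Prop :=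
  forall j, j < k -> j <> c x -> exists y, [/\ y \in S, e x y & c y = j].

Definition b_coloring (S : {set T}) (k : nat) (c : T -> nat) : Prop :=
  proper_coloring S k c /\
  (forall i, i < k -> exists x, [/\ x \in S, c x = i & b_vertex S k c x]).

Definition has_b_coloring (S : {set T}) (k : nat) : Prop :=
  exists c : T -> nat, b_coloring S k c.

Definition decide (P : Prop) : bool :=
  if excluded_middle_informative P then true else false.

(* phi(G[S]) : the largest k such that G[S] has a b-k-coloring
   (any such k satisfies k <= #|S| <= #|T|, by surjectivity) *)
Definition b_chrom (S : {set T}) : nat :=
  \max_(k < #|T|.+1 | decide (has_b_coloring S k)) k.

Definition b_chrom_r (A : {set T}) : nat :=
  \max_(S : {set T} | S \subset A) b_chrom S.

Definition is_b_atom (t : nat) (S : {set T}) : Prop :=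
  exists (D : 'I_t -> {set T}) (c : 'I_t -> T),
    [/\ \bigcup_(i < t) D i = S,
        (forall i j, i != j -> [disjoint D i & D j]),
        (forall i x y, x \in D i -> y \in D i -> ~~ e x y),
        (forall i, #|D i| <= t) &
        (forall i, c i \in D i)] /\
       (forall i j, i != j -> exists2 y, y \in D j & e (c i) y).

(* G is (isomorphic to) P_2, resp. C_3: complete graph on 2, resp. 3, vertices *)
Definition is_P2 : Prop := #|T| = 2 /\ (forall x y, x != y -> e x y).
Definition is_C3 : Prop := #|T| = 3 /\ (forall x y, x != y -> e x y).

End Graphs.

(* Main.v *)
Require Import Defs.
From HB Require Import structures.
From mathcomp Require Import all_boot all_order all_algebra.
From mathcomp Require Import zify.
From Stdlib Require ClassicalDescription Classical_Prop.
Set Implicit Arguments. Unset Strict Implicit. Unset Printing Implicit Defensive.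

Lemma decideP (P : Prop) : decide P = true <-> P.
Proof. by rewrite /decide; case: ClassicalDescription.excluded_middle_informative. Qed.

Section G.
Variables (T : finType) (e : rel T).

Lemma proper_bound (S : {set T}) k c : proper_coloring e S k c -> k <= #|S|.
Proof.
case=> _ Hsur _.
have: {subset iota 0 k <= map c (enum S)}.
  move=> j; rewrite mem_iota add0n => /Hsur [x xS <-].
  by apply: map_f; rewrite mem_enum.
by move/(uniq_leq_size (iota_uniq 0 k)); rewrite size_iota size_map -cardE.
Qed.

Lemma has_b_bound (S : {set T}) k : has_b_coloring e S k -> k <= #|T|.
Proof. by case=> c [/proper_bound Hk _]; apply: leq_trans Hk (max_card _). Qed.

Lemma b_coloring_ext (S : {set T}) k (c1 c2 : T -> nat) : {in S, c1 =1 c2} ->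
  b_coloring e S k c1 -> b_coloring e S k c2.
Proof.
move=> E [[H1 H2 H3] H4]; split; first split.
- by move=> x xS; rewrite -E //; apply: H1.
- by move=> j /H2 [x xS <-]; exists x; rewrite // E.
- by move=> x y xS yS exy; rewrite -!E //; apply: H3.
move=> i /H4 [x [xS cx bx]]; exists x; split => //; first by rewrite -E.
move=> j jk; rewrite -E // => jx; have [y [yS exy cy]] := bx j jk jx.
by exists y; rewrite -E.
Qed.

Lemma restrict (S : {set T}) k (c : T -> nat) t : b_coloring e S k c -> t <= k ->
  b_coloring e [set x in S | c x < t] t c.
Proof.
move=> [[H1 H2 H3] H4] tk; split; first split.
- by move=> x; rewrite inE => /andP[].
- move=> j jt; have [x xS cx] := H2 j (leq_trans jt tk).
  by exists x => //; rewrite inE xS cx.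
- by move=> x y; rewrite !inE => /andP[xS _] /andP[yS _]; apply: H3.
move=> i it; have [x [xS cx bx]] := H4 i (leq_trans it tk).
exists x; split => //; first by rewrite inE xS cx.
move=> j jt jx; have [y [yS exy cy]] := bx j (leq_trans jt tk) jx.
by exists y; rewrite inE yS cy jt.
Qed.

Lemma bchrom_geP (S : {set T}) t : 0 < t ->
  (t <= b_chrom e S) <-> exists k, t <= k /\ has_b_coloring e S k.
Proof.
move=> t0; split.
- move=> H; apply: Classical_Prop.NNPP => Hn.
  have : b_chrom e S <= t.-1.
    apply/bigmax_leqP => k /decideP Hk; rewrite -ltnS prednK //.
    by rewrite ltnNge; apply/negP => tk; apply: Hn; exists k.
  by rewrite leqNgt prednK // H.
- case=> k [tk Hk]; have kT := has_b_bound Hk.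
  apply: leq_trans tk _.
  have := @leq_bigmax_cond _ (fun k : 'I_#|T|.+1 => decide (has_b_coloring e S k))
     (fun k => nat_of_ord k) (Ordinal (n:=#|T|.+1) (m:=k) kT).
  by apply; apply/decideP.
Qed.

Lemma bchromr_geP (A : {set T}) t : 0 < t ->
  (t <= b_chrom_r e A) <-> exists S : {set T}, S \subset A /\ has_b_coloring e S t.
Proof.
move=> t0; split.
- move=> H; apply: Classical_Prop.NNPP => Hn.
  have : b_chrom_r e A <= t.-1.
    apply/bigmax_leqP => S SA; rewrite -ltnS prednK // ltnNge; apply/negP.
    move/(bchrom_geP _ t0) => [k [tk [c Hc]]]; apply: Hn.
    exists [set x in S | c x < t]; split.
      by apply: subset_trans SA; apply/subsetP => x; rewrite inE => /andP[].
    by rewrite /has_b_coloring; exists c; apply: restrict Hc tk.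
  by rewrite leqNgt prednK // H.
- case=> S [SA HS]; apply: leq_trans (leq_bigmax_cond _ SA).
  by apply/(bchrom_geP _ t0); exists t.
Qed.

Lemma eq_prof a b : (forall t, 0 < t -> (t <= a <-> t <= b)) -> a = b.
Proof.
move=> H; apply/eqP; rewrite eqn_leq; apply/andP; split.
  by case: a H => // a H; apply/(H a.+1 _).
by case: b H => // b H; apply/(H b.+1 _).
Qed.

Lemma bchromr_mono (A B : {set T}) : A \subset B -> b_chrom_r e A <= b_chrom_r e B.
Proof.
move=> AB; case Ha: (b_chrom_r e A) => [//|a].
have := (bchromr_geP A (ltn0Sn a)).1; rewrite Ha => /(_ (leqnn _)) [S [SA HS]].
by apply/(bchromr_geP _ (ltn0Sn a)); exists S; split => //; apply: subset_trans AB.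
Qed.


Lemma atom3P : (exists S : {set T}, is_b_atom e 3 S) <->
  exists S : {set T}, has_b_coloring e S 3.
Proof.
split.
- case=> S [D [c [[HU Hdis Hind Hcard Hc] Hnb]]].
  pose col x := if [pick i | x \in D i] is Some i then nat_of_ord i else 0.
  have colE i x : x \in D i -> col x = i.
    move=> xi; rewrite /col; case: pickP => [j xj | /(_ i)]; last by rewrite xi.
    case: (eqVneq j i) => [-> //| ji].
    by have := disjointFr (Hdis j i ji) xj; rewrite xi.
  have inS x : x \in S -> exists i, x \in D i.
    by rewrite -HU => /bigcupP [i _ xi]; exists i.
  have DS i x : x \in D i -> x \in S.
    by move=> xi; rewrite -HU; apply/bigcupP; exists i.
  exists S, col; split; first split.
  + move=> x _; rewrite /col; case: pickP => // i _; exact: ltn_ord.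
  + move=> j j3; exists (c (Ordinal j3)); first exact: (DS _ _ (Hc _)).
    by rewrite (colE _ _ (Hc _)).
  + move=> x y /inS [i xi] /inS [j yj] exy.
    rewrite (colE _ _ xi) (colE _ _ yj) => /val_inj ij; subst j.
    by move: (Hind i x y xi yj); rewrite exy.
  + move=> i i3; exists (c (Ordinal i3)); split.
    * exact: (DS _ _ (Hc _)).
    * by rewrite (colE _ _ (Hc _)).
    * move=> j j3; rewrite (colE _ _ (Hc _)) /= => ji.
      have ij : Ordinal i3 != Ordinal j3 by apply/eqP => -[] /esym.
      have [y yj exy] := Hnb _ _ ij; exists y; split => //; first exact: DS yj.
      by rewrite (colE _ _ yj).
- case=> S [c [[Hlt Hsur Hpr] Hb]].
  have : forall i : 'I_3, exists x, [/\ x \in S, c x = i & b_vertex e S 3 c x].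
    by move=> i; apply: Hb; apply: ltn_ord.
  case/fin_all_exists => x Hx.
  have : forall i : 'I_3, exists u : 'I_3 -> T, forall j : 'I_3, i != j ->
      [/\ u j \in S, e (x i) (u j) & c (u j) = j].
    move=> i; apply: (@fin_all_exists _ (fun _ => T) (fun j u => i != j -> [/\ u \in S, e (x i) u & c u = j])) => j.
    case: (eqVneq i j) => [<-|ij]; first by exists (x i).
    have [_ cx bx] := Hx i.
    have jx : nat_of_ord j <> c (x i) by rewrite cx => /val_inj ji; move: ij; rewrite ji eqxx.
    have [y [yS exy cy]] := bx j (ltn_ord j) jx.
    by exists y.
  case/fin_all_exists => y Hy.
  pose D j := x j |: [set y i j | i in [set~ j]].
  have DP j z : z \in D j -> z \in S /\ c z = j.
    rewrite !inE => /orP [/eqP -> | /imsetP [i]]; first by have [] := Hx j.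
    rewrite !inE => ij ->.
    by have [] := Hy i j ij.
  exists (\bigcup_(i < 3) D i), D, x; split; first split.
  + by [].
  + move=> i j ij; rewrite -setI_eq0; apply/eqP/setP => z; rewrite in_setI in_set0.
    apply/negbTE/negP => /andP [/DP [_ czi] /DP [_ czj]].
    have ji : i = j by apply: ord_inj; rewrite -czi -czj.
    by move: ij; rewrite ji eqxx.
  + move=> i z w /DP [zS cz] /DP [wS cw]; apply/negP => ezw.
    by apply: (Hpr z w zS wS ezw); rewrite cz cw.
  + move=> i; rewrite cardsU1; apply: leq_trans (leq_add (leq_b1 _) (leq_imset_card _ _)) _.
    by rewrite cardsC1 card_ord.
  + by move=> i; rewrite !inE eqxx.
  + move=> i j ij; exists (y i j); last by have [] := Hy i j ij.
    rewrite /D; apply/setU1P; right; apply/imsetP; by exists i; rewrite ?inE.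
Qed.

End G.

Lemma disj2 (T : finType) (x y u w : T) :
  [disjoint [set x; y] & [set u; w]] = [&& x != u, x != w, y != u & y != w].
Proof.
rewrite -setI_eq0; apply/idP/idP => [/eqP H | /and4P [h1 h2 h3 h4]].
- apply/and4P; split; apply/negP => /eqP E;
  [ have := in_set0 x | have := in_set0 x | have := in_set0 y | have := in_set0 y ];
  by rewrite -H !inE E !eqxx ?orbT.
- apply/eqP/setP => z; rewrite !inE; apply/negbTE/negP.
  by case/andP => /orP [] /eqP -> /orP [] /eqP E; rewrite E eqxx in h1 h2 h3 h4.
Qed.

Lemma transfer_col (T T' : finType) (e : rel T) (e' : rel T') (f : T' -> T) (g : T -> T')
  (gK : cancel g f) (ee : forall x y, e' x y = e (f x) (f y)) (S : {set T}) k c :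
  b_coloring e S k c -> b_coloring e' (f @^-1: S) k (fun x => c (f x)).
Proof.
move=> [[H1 H2 H3] H4]; split; first split.
- by move=> x; rewrite inE => /H1.
- by move=> j /H2 [x xS <-]; exists (g x); rewrite ?inE gK.
- by move=> x y; rewrite !inE ee => xS yS; apply: H3.
move=> i /H4 [x [xS cx bx]]; exists (g x); split; rewrite ?inE ?gK //.
move=> j jk; rewrite gK => jx; have [y [yS exy cy]] := bx j jk jx.
by exists (g y); rewrite inE ee !gK.
Qed.

Section Transport.
Variables (T T' : finType) (e : rel T) (e' : rel T') (f : T' -> T) (g : T -> T').
Hypotheses (fK : cancel f g) (gK : cancel g f) (ee : forall x y, e' x y = e (f x) (f y)).

Lemma ee' x y : e x y = e' (g x) (g y).
Proof. by rewrite ee !gK. Qed.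

Lemma hasb_transfer S k : has_b_coloring e S k <-> has_b_coloring e' (f @^-1: S) k.
Proof.
split; case=> c Hc.
  by exists (fun x => c (f x)); apply: transfer_col Hc.
have := transfer_col fK ee' Hc.
have -> : g @^-1: (f @^-1: S) = S by apply/setP => x; rewrite !inE gK.
by move=> H; exists (fun x => c (g x)).
Qed.

Lemma bchromr_transfer A : b_chrom_r e A = b_chrom_r e' (f @^-1: A).
Proof.
apply: eq_prof => t t0; rewrite (bchromr_geP _ _ t0) (bchromr_geP _ _ t0); split.
  case=> S [SA HS]; exists (f @^-1: S); split; first exact: preimsetS.
  by apply/hasb_transfer.
case=> S [SA HS]; exists (g @^-1: S); split.
  apply/subsetP => x; rewrite inE => /(subsetP SA); by rewrite inE gK.
apply/hasb_transfer.
by have -> : f @^-1: (g @^-1: S) = S by apply/setP => x; rewrite !inE fK.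
Qed.

Lemma card_transfer : #|T| = #|T'|.
Proof. by apply: (bij_eq_card (f := g)); exists f. Qed.

Lemma P2_transfer : is_P2 e <-> is_P2 e'.
Proof.
rewrite /is_P2 card_transfer; split; case=> -> H; split => // x y.
  by move=> xy; rewrite ee; apply: H; apply: contra xy => /eqP/(can_inj fK) ->.
by move=> xy; rewrite ee'; apply: H; apply: contra xy => /eqP/(can_inj gK) ->.
Qed.

Lemma C3_transfer : is_C3 e <-> is_C3 e'.
Proof.
rewrite /is_C3 card_transfer; split; case=> -> H; split => // x y.
  by move=> xy; rewrite ee; apply: H; apply: contra xy => /eqP/(can_inj fK) ->.
by move=> xy; rewrite ee'; apply: H; apply: contra xy => /eqP/(can_inj gK) ->.
Qed.

Lemma edgeless_transfer : (forall x y : T, ~~ e x y) <-> (forall x y : T', ~~ e' x y).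
Proof. by split=> H x y; [rewrite ee | rewrite ee']; apply: H. Qed.

Lemma disj_transfer :
  (exists x y u w : T, [/\ e x y, e u w & [disjoint [set x; y] & [set u; w]]]) <->
  (exists x y u w : T', [/\ e' x y, e' u w & [disjoint [set x; y] & [set u; w]]]).
Proof.
have gi := can_inj gK; have fi := can_inj fK.
split; case=> x [y [u [w [H1 H2]]]]; rewrite disj2 => /and4P [h1 h2 h3 h4].
  exists (g x), (g y), (g u), (g w); rewrite -!ee' disj2 !(inj_eq gi) h1 h2 h3 h4.
  by split.
exists (f x), (f y), (f u), (f w); rewrite -!ee disj2 !(inj_eq fi) h1 h2 h3 h4.
by split.
Qed.

End Transport.


Fixpoint allmasks n : seq (seq bool) :=
  if n is n'.+1 then [seq b :: l | b <- [:: false; true], l <- allmasks n'] else [:: [::]].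
Fixpoint rgs (m : seq bool) (d : nat) : seq (seq nat) :=
  if m is b :: m' then
    if b then [seq j :: l | j <- iota 0 d.+1, l <- rgs m' (if j == d then d.+1 else d)]
    else [seq 0 :: l | l <- rgs m' d]
  else [:: [::]].
Definition col (l : seq nat) i := nth 0 l i.
Definition inm (m : seq bool) i := nth false m i.

Section C.
Variables (adj : nat -> nat -> bool) (n : nat).
Definition vs := iota 0 n.
Definition svm m := [seq i <- vs | inm m i].
Definition proper_f sv k l :=
  [&& all (fun i => all (fun j => adj i j ==> (col l i != col l j)) sv) sv,
      all (fun i => col l i < k) sv &
      all (fun j => has (fun i => col l i == j) sv) (iota 0 k)].
Definition bvert_f sv k l x :=
  all (fun j => (j != col l x) ==> has (fun y => adj x y && (col l y == j)) sv) (iota 0 k).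
Definition bcol_f sv k l :=
  proper_f sv k l && all (fun i => has (fun x => (col l x == i) && bvert_f sv k l x) sv) (iota 0 k).
Definition kof_f sv l := foldr maxn 0 [seq (col l i).+1 | i <- sv].
Definition bchrom_c m := let sv := svm m in
  foldr (fun l acc => let k := kof_f sv l in if bcol_f sv k l then maxn k acc else acc) 0 (rgs m 0).
Definition subm (m1 m2 : seq bool) := all (fun i => inm m1 i ==> inm m2 i) vs.
Definition tab := [seq (m, bchrom_c m) | m <- allmasks n].
Definition phir_t (t : seq (seq bool * nat)) m := foldr maxn 0 [seq p.2 | p <- t & subm p.1 m].
Definition disj_c := has (fun x => has (fun y => has (fun u => has (fun w =>
   [&& adj x y, adj u w, x != u, x != w, y != u & y != w]) vs) vs) vs) vs.
Definition compl_c := all (fun x => all (fun y => (x != y) ==> adj x y) vs) vs.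
Definition edgeless_c := all (fun x => all (fun y => ~~ adj x y) vs) vs.
Definition fullm := nseq n true.
Definition delm v := [seq i != v | i <- vs].
Definition lhs_t t := all (fun v => phir_t t (delm v) + 2 == phir_t t fullm + n./2) vs.
Definition rhs_t t := [|| ((n == 2) || (n == 3)) && compl_c, edgeless_c && (4 <= n <= 5) |
   [&& 4 <= n <= 5, disj_c & phir_t t fullm < 3]].
Definition check := let t := tab in lhs_t t == rhs_t t.
End C.
Definition upairs n := [seq p <- [seq (i, j) | i <- iota 0 n, j <- iota 0 n] | p.1 < p.2].
Definition adjb n (bits : seq bool) i j :=
  if i < j then nth false bits (index (i, j) (upairs n))
  else if j < i then nth false bits (index (j, i) (upairs n)) else false.
Definition mat n (bits : seq bool) := [seq [seq adjb n bits i j | j <- iota 0 n] | i <- iota 0 n].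
Definition adjm (am : seq (seq bool)) i j := nth false (nth [::] am i) j.
Definition check_all n := all (fun bits => check (adjm (mat n bits)) n) (allmasks (size (upairs n))).

Lemma check_all_ok n : 2 <= n <= 5 -> check_all n = true.
Proof.
case: n => [//|[//|[|[|[|[|//]]]]]] _; by vm_compute.
Qed.

Lemma foldr_max_geP t s : 0 < t ->
  (t <= foldr maxn 0 s) <-> exists2 x, x \in s & t <= x.
Proof.
move=> t0; elim: s => [|a s IH] /=.
  by split => [|[]//]; rewrite leqNgt t0.
rewrite leq_max; split.
- case/orP => [ta | /IH [x xs tx]]; first by exists a; rewrite ?inE ?eqxx.
  by exists x; rewrite // inE xs orbT.
- case=> x; rewrite inE => /orP [/eqP -> -> // | xs tx].
  by apply/orP; right; apply/IH; exists x.
Qed.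

Lemma foldr_max_le s b : (forall x, x \in s -> x <= b) -> foldr maxn 0 s <= b.
Proof.
elim: s => [|a s IH] //= H; rewrite geq_max H ?inE ?eqxx //=.
by apply: IH => x xs; apply: H; rewrite inE xs orbT.
Qed.

Lemma foldr_max_ge s x : x \in s -> x <= foldr maxn 0 s.
Proof.
elim: s => [|a s IH] //=; rewrite inE => /orP [/eqP -> | xs].
  by rewrite leq_maxl.
by rewrite leq_max IH ?orbT.
Qed.

Lemma foldr_if_geP (A : eqType) (s : seq A) (P : A -> bool) (F : A -> nat) t : 0 < t ->
  (t <= foldr (fun l acc => if P l then maxn (F l) acc else acc) 0 s)
  <-> exists2 l, l \in s & P l && (t <= F l).
Proof.
move=> t0; elim: s => [|a s IH] /=.
  by split => [|[]//]; rewrite leqNgt t0.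
case Pa: (P a).
- rewrite leq_max; split.
  + case/orP => [ta | /IH [x xs tx]]; first by exists a; rewrite ?inE ?eqxx ?Pa.
    by exists x; rewrite // inE xs orbT.
  + case=> x; rewrite inE => /orP [/eqP -> /andP [_ ->] // | xs tx].
    by apply/orP; right; apply/IH; exists x.
- split.
  + by case/IH => x xs tx; exists x; rewrite // inE xs orbT.
  + case=> x; rewrite inE => /orP [/eqP -> | xs tx]; first by rewrite Pa.
    by apply/IH; exists x.
Qed.

Lemma bigmax_geP (I : finType) (P : pred I) (F : I -> nat) t : 0 < t ->
  (t <= \max_(i | P i) F i) <-> exists i, P i /\ t <= F i.
Proof.
move=> t0; split.
- move=> H; apply: Classical_Prop.NNPP => Hn.
  have : \max_(i | P i) F i <= t.-1.
    apply/bigmax_leqP => i Pi; rewrite -ltnS prednK // ltnNge; apply/negP => ti.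
    by apply: Hn; exists i.
  by rewrite leqNgt prednK // H.
- by case=> i [Pi ti]; apply: leq_trans ti (leq_bigmax_cond _ Pi).
Qed.

Lemma relabel (T : finType) (e : rel T) (S : {set T}) k (c : T -> nat) (g : nat -> nat) :
  b_coloring e S k c ->
  (forall a, a < k -> g a < k) ->
  (forall a b, a < k -> b < k -> g a = g b -> a = b) ->
  (forall j, j < k -> exists2 a, a < k & g a = j) ->
  b_coloring e S k (fun x => g (c x)).
Proof.
move=> [[H1 H2 H3] H4] gk gi gs; split; first split.
- by move=> x xS; apply/gk/H1.
- move=> j /gs [a ak <-]; have [x xS cx] := H2 a ak; by exists x; rewrite ?cx.
- move=> x y xS yS exy /(gi _ _ (H1 _ xS) (H1 _ yS)); exact: H3.
move=> i /gs [a ak <-]; have [x [xS cx bx]] := H4 a ak.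
exists x; split; rewrite ?cx //.
move=> j /gs [b bk <-] ba.
have bx' : b <> c x by move=> E; apply: ba; rewrite E cx.
have [y [yS exy cy]] := bx b bk bx'.
by exists y; rewrite cy.
Qed.

(* relabelling of colourings into restricted growth strings *)
Fixpoint relab (m : seq bool) (l : seq nat) (D : seq nat) : seq nat * seq nat :=
  match m, l with
  | b :: m', a :: l' =>
     if b then
       if a \in D then let r := relab m' l' D in (index a D :: r.1, r.2)
       else let r := relab m' l' (rcons D a) in (size D :: r.1, r.2)
     else let r := relab m' l' D in (0 :: r.1, r.2)
  | _, _ => ([::], D)
  end.

Lemma rgs_t m d : rgs (true :: m) d =
  [seq j :: l | j <- iota 0 d.+1, l <- rgs m (if j == d then d.+1 else d)].
Proof. by []. Qed.
Lemma rgs_f m d : rgs (false :: m) d = [seq 0 :: l | l <- rgs m d].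
Proof. by []. Qed.

Lemma relab_rgs m l D : size l = size m -> (relab m l D).1 \in rgs m (size D).
Proof.
elim: m l D => [|b m IH] [|a l] D sl; [by rewrite inE | by case: sl | by case: sl | move: sl => [sl]].
case: b; rewrite ?rgs_t ?rgs_f.
- rewrite [relab _ _ _]/=; case: ifP => aD.
  + apply/allpairsPdep; exists (index a D), (relab m l D).1; split => //.
      by rewrite mem_iota /= ltnS ltnW // index_mem.
    by rewrite eqn_leq (leqNgt (size D)) index_mem aD andbF; apply: IH.
  + apply/allpairsPdep; exists (size D), (relab m l (rcons D a)).1; split => //.
      by rewrite mem_iota /= ltnS.
    by rewrite eqxx -(size_rcons D a); apply: IH.
- by rewrite [relab _ _ _]/=; apply: map_f; apply: IH.
Qed.

Lemma relab_spec m l D : size l = size m -> uniq D ->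
  let r := relab m l D in
  [/\ exists t, r.2 = D ++ t, uniq r.2,
      (forall i, i < size m -> nth false m i ->
          nth 0 l i \in r.2 /\ nth 0 r.1 i = index (nth 0 l i) r.2) &
      (forall a, a \in r.2 -> a \in D \/
          exists2 i, i < size m & nth false m i && (nth 0 l i == a))].
Proof.
elim: m l D => [|b m IH] [|a l] D sl uD; [ | by case: sl | by case: sl | move: sl => [sl]].
  simpl; split => //; first by exists [::]; rewrite cats0.
  by move=> a aD; left.
case: b; simpl.
- case: ifP => aD /=.
  + have [[t Et] ur HP HQ] := IH l D sl uD.
    split => //; first by exists t.
    * case=> [|i] /=; last by rewrite ltnS; apply: HP.
      by move=> _ _; rewrite Et mem_cat aD index_cat aD.
    * move=> a' /HQ [] ; first by left.
      by case=> i im Hi; right; exists i.+1.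
  + have uD' : uniq (rcons D a) by rewrite rcons_uniq aD.
    have [[t Et] ur HP HQ] := IH l (rcons D a) sl uD'.
    split => //; first by exists (a :: t); rewrite Et cat_rcons.
    * case=> [|i] /=; last by rewrite ltnS; apply: HP.
      move=> _ _; rewrite Et cat_rcons mem_cat inE eqxx orbT index_cat aD /=.
      by rewrite eqxx addn0.
    * move=> a' /HQ []; last by case=> i im Hi; right; exists i.+1.
      rewrite mem_rcons inE => /orP [/eqP -> | ]; last by left.
      by right; exists 0 => //=; rewrite eqxx.
- have [[t Et] ur HP HQ] := IH l D sl uD.
  split => //; first by exists t.
  * by case=> [|i] //=; rewrite ltnS; apply: HP.
  * move=> a' /HQ []; first by left.
    by case=> i im Hi; right; exists i.+1.
Qed.

Section Bridge.
Variables (adj : nat -> nat -> bool) (n : nat).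
Definition eI : rel 'I_n := fun x y => adj x y.

Lemma allvsP (P : pred nat) : reflect (forall x : 'I_n, P x) (all P (vs n)).
Proof.
apply: (iffP allP) => [H x | H i]; first by apply: H; rewrite mem_iota /= add0n ltn_ord.
by rewrite mem_iota add0n => /andP [_ ilt]; exact: (H (Ordinal ilt)).
Qed.

Lemma hasvsP (P : pred nat) : reflect (exists x : 'I_n, P x) (has P (vs n)).
Proof.
apply: (iffP hasP) => [[i] | [x Px]]; last by exists (nat_of_ord x); rewrite // mem_iota /= add0n ltn_ord.
by rewrite mem_iota add0n => /andP [_ ilt] Pi; exists (Ordinal ilt).
Qed.

Lemma allkP (P : pred nat) k : reflect (forall j, j < k -> P j) (all P (iota 0 k)).
Proof.
apply: (iffP allP) => [H j jk | H j]; first by apply: H; rewrite mem_iota /= add0n.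
by rewrite mem_iota add0n => /andP [_ ilt]; apply: H.
Qed.

Section S.
Variables (S : {set 'I_n}) (m : seq bool).
Hypothesis HS : forall x : 'I_n, (x \in S) = inm m x.

Lemma allsvP (P : pred nat) : reflect (forall x : 'I_n, x \in S -> P x) (all P (svm n m)).
Proof.
apply: (iffP allP) => [H x xS | H i].
  by apply: H; rewrite mem_filter -HS xS mem_iota /= add0n ltn_ord.
rewrite mem_filter mem_iota add0n => /andP [mi /andP [_ ilt]].
by apply: (H (Ordinal ilt)); rewrite HS.
Qed.

Lemma hassvP (P : pred nat) : reflect (exists2 x : 'I_n, x \in S & P x) (has P (svm n m)).
Proof.
apply: (iffP hasP) => [[i] | [x xS Px]].
  rewrite mem_filter mem_iota add0n => /andP [mi /andP [_ ilt]] Pi.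
  by exists (Ordinal ilt); rewrite ?HS.
by exists (nat_of_ord x); rewrite // mem_filter -HS xS mem_iota /= add0n ltn_ord.
Qed.

Lemma bcolP k l : bcol_f adj (svm n m) k l <-> b_coloring eI S k (fun x => col l x).
Proof.
rewrite /bcol_f /proper_f; split.
- case/andP => /and3P [/allsvP Hp /allsvP Hb /allkP Hs] /allkP Hv.
  split; first split.
  + exact: Hb.
  + by move=> j /Hs /hassvP [x xS /eqP cx]; exists x.
  + move=> x y xS yS exy; move: (Hp x xS) => /allsvP /(_ y yS).
    by rewrite /eI in exy; rewrite exy /= => /eqP.
  + move=> i /Hv /hassvP [x xS /andP [/eqP cx /allkP bx]]; exists x; split => //.
    move=> j jk /eqP jx; move: (bx j jk); rewrite jx /= => /hassvP [y yS /andP [exy /eqP cy]].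
    by exists y.
- case => [[Hb Hs Hp] Hv]; apply/andP; split; first (apply/and3P; split).
  + apply/allsvP => x xS; apply/allsvP => y yS; apply/implyP => exy; apply/eqP.
    exact: Hp x y xS yS exy.
  + by apply/allsvP => x xS; exact: Hb.
  + apply/allkP => j jk; have [x xS cx] := Hs j jk.
    by apply/hassvP; exists x; rewrite // cx.
  + apply/allkP => i ik; have [x [xS cx bx]] := Hv i ik; apply/hassvP; exists x => //.
    rewrite cx eqxx /=; apply/allkP => j jk; apply/implyP => /eqP jx.
    have [y [yS exy cy]] := bx j jk jx.
    by apply/hassvP; exists y; rewrite // /eI in exy; rewrite exy cy eqxx.
Qed.

Hypothesis sm : size m = n.

Lemma hasbP k : has_b_coloring eI S k <->
  exists2 l, l \in rgs m 0 & bcol_f adj (svm n m) k l.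
Proof.
split; last by case=> l _ /bcolP Hl; exists (fun x : 'I_n => col l x).
case=> c Hc.
pose c' i := if (insub i : option 'I_n) is Some x then c x else 0.
pose l0 := [seq (if inm m i then c' i else 0) | i <- vs n].
have l0E (x : 'I_n) : x \in S -> col l0 x = c x.
  move=> xS; rewrite /col (nth_map 0) ?size_iota // nth_iota // add0n -HS xS /c'.
  by rewrite valK.
have sl0 : size l0 = size m by rewrite size_map size_iota sm.
case: Hc => [[H1 H2 H3] H4].
have Hrgs := relab_rgs [::] sl0.
have [_ uD HP HQ] := relab_spec (D := [::]) sl0 (isT : uniq (@nil nat)).
move: Hrgs uD HP HQ; case: (relab m l0 [::]) => l1 D /= Hrgs uD HP HQ.
exists l1 => //; apply/bcolP.
have Dk a : a \in D -> a < k.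
  case/HQ => [//|[i im /andP [mi /eqP <-]]].
  rewrite sm in im; have xS : Ordinal im \in S by rewrite HS.
  by have := l0E _ xS; rewrite /col /= => ->; apply: H1.
have kD j : j < k -> j \in D.
  move=> /H2 [x xS cx]; have mx : nth false m x by move: xS; rewrite HS.
  have := HP x; rewrite sm ltn_ord => /(_ isT mx) [].
  by have := l0E _ xS; rewrite /col => -> ; rewrite cx.
have sD : size D = k.
  apply/eqP; rewrite eqn_leq; apply/andP; split.
    have := uniq_leq_size uD (s2 := iota 0 k); rewrite size_iota; apply.
    by move=> a /Dk ak; rewrite mem_iota add0n.
  have := uniq_leq_size (iota_uniq 0 k) (s2 := D); rewrite size_iota; apply.
  by move=> a; rewrite mem_iota add0n => /andP [_ /kD].
have Hc : b_coloring eI S k c by split.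
have := relabel (g := fun a => index a D) Hc.
case.
- by move=> a /kD aD; rewrite -sD index_mem.
- move=> a b /kD aD /kD bD ab; by rewrite -(nth_index 0 aD) -(nth_index 0 bD) ab.
- move=> j jk; exists (nth 0 D j); last by rewrite index_uniq // sD.
  by apply: Dk; rewrite mem_nth // sD.
move=> HH1 HH2; apply: (b_coloring_ext (c1 := fun x => index (c x) D)); last by split.
move=> x xS /=; rewrite /col; have mx : nth false m x by move: xS; rewrite HS.
have := HP x; rewrite sm ltn_ord => /(_ isT mx) [_ ->].
by have := l0E _ xS; rewrite /col => ->.
Qed.

End S.

Lemma kofE sv k l : bcol_f adj sv k l -> kof_f sv l = k.
Proof.
case/andP => /and3P [_ Hb Hs] _; apply/eqP; rewrite eqn_leq; apply/andP; split.
  by apply: foldr_max_le => x /mapP [i isv ->]; apply: (allP Hb).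
case: k Hb Hs => [//|k] Hb Hs.
have kin : k \in iota 0 k.+1 by rewrite mem_iota /= add0n.
have /hasP [i isv /eqP ci] := allP Hs k kin.
by apply: foldr_max_ge; apply/mapP; exists i; rewrite ?ci.
Qed.

Lemma bchromE (S : {set 'I_n}) m : (forall x : 'I_n, (x \in S) = inm m x) ->
  size m = n -> bchrom_c adj n m = b_chrom eI S.
Proof.
move=> HS sm; apply: eq_prof => t t0; rewrite (bchrom_geP _ _ t0) /bchrom_c.
rewrite (foldr_if_geP _ (fun l => bcol_f adj (svm n m) (kof_f (svm n m) l) l)
                       (kof_f (svm n m)) t0).
split.
- case=> l lr /andP [Hl tk]; exists (kof_f (svm n m) l); split => //.
  by apply/(hasbP HS sm); exists l.
- case=> k [tk /(hasbP HS sm) [l lr Hl]]; exists l => //.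
  by rewrite (kofE Hl) Hl.
Qed.

Lemma allmasksP m k : (m \in allmasks k) = (size m == k).
Proof.
elim: k m => [|k IH] [|b m] //.
- by apply/negbTE/negP => /allpairsP [[b l] [_ _ ]].
apply/allpairsP/idP => [[[b' l] [_ /= lin [_ ->]]] | sm].
  by rewrite /= eqSS -IH.
by exists (b, m); split => //; [case: (b) | rewrite IH].
Qed.

Definition maskS (S : {set 'I_n}) :=
  [seq (if (insub i : option 'I_n) is Some x then x \in S else false) | i <- vs n].

Lemma maskSE S (x : 'I_n) : inm (maskS S) x = (x \in S).
Proof. by rewrite /inm (nth_map 0) ?size_iota // nth_iota // add0n valK. Qed.

Lemma size_maskS S : size (maskS S) = n.
Proof. by rewrite size_map size_iota. Qed.

Lemma phirE (A : {set 'I_n}) m : (forall x : 'I_n, (x \in A) = inm m x) ->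
  phir_t n (tab adj n) m = b_chrom_r eI A.
Proof.
move=> HA; apply: eq_prof => t t0; rewrite (foldr_max_geP _ t0) /b_chrom_r (bigmax_geP _ _ t0).
split.
- case=> x /mapP [p]; rewrite mem_filter => /andP [sp /mapP [m' m'in Ep]] -> tx; subst p.
  have sm' : size m' = n by apply/eqP; rewrite -allmasksP.
  exists [set x : 'I_n | inm m' x]; split.
    apply/subsetP => y; rewrite inE HA => ym'.
    by move/allvsP: sp => /(_ y) /=; rewrite ym'.
  by rewrite -(bchromE _ sm') // => y; rewrite inE.
- case=> S [SA tS]; exists (b_chrom eI S) => //.
  apply/mapP; exists (maskS S, b_chrom eI S) => //.
  rewrite mem_filter; apply/andP; split.
    by apply/allvsP => y /=; rewrite maskSE -HA; apply/implyP => /(subsetP SA).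
  apply/mapP; exists (maskS S); first by rewrite allmasksP size_maskS.
  by rewrite (bchromE (S := S)) // ?size_maskS // => y; rewrite maskSE.
Qed.

End Bridge.

Section CB.
Variables (adj : nat -> nat -> bool) (n : nat).

Lemma compl_cP : compl_c adj n <-> forall x y : 'I_n, x != y -> eI adj x y.
Proof.
split => [/allvsP H x y xy | H]; first by move/allvsP: (H x) => /(_ y) /implyP; apply.
by apply/allvsP => x; apply/allvsP => y; apply/implyP => xy; apply: H.
Qed.

Lemma edgeless_cP : edgeless_c adj n <-> forall x y : 'I_n, ~~ eI adj x y.
Proof.
split => [/allvsP H x y | H]; first by move/allvsP: (H x) => /(_ y).
by apply/allvsP => x; apply/allvsP => y; apply: H.
Qed.

Lemma disj_cP : disj_c adj n <-> exists x y u w : 'I_n,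
   [/\ eI adj x y, eI adj u w & [disjoint [set x; y] & [set u; w]]].
Proof.
split.
- case/hasvsP => x /hasvsP [y /hasvsP [u /hasvsP [w H]]].
  case/and3P: H => exy euw H; exists x, y, u, w; split => //; rewrite disj2; exact: H.
- case=> x [y [u [w [exy euw]]]]; rewrite disj2 => H.
  apply/hasvsP; exists x; apply/hasvsP; exists y; apply/hasvsP; exists u; apply/hasvsP; exists w.
  by rewrite /eI in exy euw; rewrite exy euw.
Qed.

Lemma check_bridge : check adj n = true ->
  ((forall v : 'I_n, b_chrom_r (@eI adj n) [set~ v] + 2 = b_chrom_r (@eI adj n) setT + n./2) <->
   [\/ is_P2 (@eI adj n) \/ is_C3 (@eI adj n),
       (forall x y : 'I_n, ~~ eI adj x y) /\ (4 <= n <= 5) |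
       (4 <= n <= 5) /\
       (exists x y u w : 'I_n,
          [/\ eI adj x y, eI adj u w & [disjoint [set x; y] & [set u; w]]]) /\
       b_chrom_r (@eI adj n) setT < 3]).
Proof.
rewrite /check => /eqP Hc.
have Hfull : phir_t n (tab adj n) (fullm n) = b_chrom_r (@eI adj n) setT.
  by apply: phirE => x; rewrite inE /inm nth_nseq ltn_ord.
have Hdel (v : 'I_n) : phir_t n (tab adj n) (delm n v) = b_chrom_r (@eI adj n) [set~ v].
  by apply: phirE => x; rewrite in_setC1 /inm (nth_map 0) ?size_iota // nth_iota // add0n.
have L : (forall v : 'I_n, b_chrom_r (@eI adj n) [set~ v] + 2 = b_chrom_r (@eI adj n) setT + n./2)
    <-> lhs_t n (tab adj n).
  split => [H | /allvsP H v].
    by apply/allvsP => v; rewrite Hdel Hfull H.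
  by move: (H v); rewrite Hdel Hfull => /eqP.
apply: (iff_trans L); rewrite Hc /rhs_t.
have P2E : is_P2 (@eI adj n) <-> (n == 2) && compl_c adj n.
  rewrite /is_P2 card_ord; split => [[n2 H] | /andP [/eqP n2 Hc']].
    by apply/andP; split; [rewrite n2 | apply/compl_cP].
  by split => //; apply/compl_cP.
have C3E : is_C3 (@eI adj n) <-> (n == 3) && compl_c adj n.
  rewrite /is_C3 card_ord; split => [[n2 H] | /andP [/eqP n2 Hc']].
    by apply/andP; split; [rewrite n2 | apply/compl_cP].
  by split => //; apply/compl_cP.
split.
- case/orP => [/andP [/orP [n2|n3] Hcm] | /orP [/andP [He r] | /and3P [r Hd Hb]]].
  + by apply: Or31; left; apply/P2E; rewrite n2.
  + by apply: Or31; right; apply/C3E; rewrite n3.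
  + by apply: Or32; split => //; apply/edgeless_cP.
  + by apply: Or33; split => //; split; [apply/disj_cP | rewrite -Hfull].
- case => [[/P2E | /C3E] | [/edgeless_cP He r] | [r [/disj_cP Hd Hb]]].
  + by case/andP => -> ->.
  + by case/andP => -> ->; rewrite orbT.
  + by rewrite He r orbT.
  + by rewrite r Hd Hfull Hb !orbT.
Qed.

End CB.

Lemma bits_ok (T : finType) (e : rel T) (esym : symmetric e) (eirr : irreflexive e)
  n (f : 'I_n -> T) :
  exists bits, size bits = size (upairs n) /\
     forall x y : 'I_n, adjm (mat n bits) x y = e (f x) (f y).
Proof.
pose F (p : nat * nat) := if (insub p.1 : option 'I_n) is Some x then
   (if (insub p.2 : option 'I_n) is Some y then e (f x) (f y) else false) else false.
exists [seq F p | p <- upairs n]; split; first by rewrite size_map.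
have Hin (i j : 'I_n) : i < j -> (nat_of_ord i, nat_of_ord j) \in upairs n.
  move=> ij; rewrite mem_filter /= ij; apply/allpairsP.
  by exists (nat_of_ord i, nat_of_ord j); rewrite !mem_iota /= !add0n !ltn_ord.
move=> x y; rewrite /adjm /mat (nth_map 0) ?size_iota // nth_iota // add0n.
rewrite (nth_map 0) ?size_iota // nth_iota // add0n /adjb.
case: ltngtP => [xy | yx | xy].
- by rewrite (nth_map (0,0)) ?index_mem ?Hin // nth_index ?Hin //= /F /= !valK.
- by rewrite (nth_map (0,0)) ?index_mem ?Hin // nth_index ?Hin //= /F /= !valK esym.
- by have -> : x = y by apply: val_inj. 
Qed.

Lemma bchromr_le_card (T : finType) (e : rel T) (A : {set T}) : b_chrom_r e A <= #|A|.
Proof.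
case Hb: (b_chrom_r e A) => [//|b].
have := (bchromr_geP e A (ltn0Sn b)).1; rewrite Hb => /(_ (leqnn _)) [S [SA [c Hc]]].
by apply: leq_trans (subset_leq_card SA); case: Hc => /proper_bound.
Qed.

Lemma main_nat (T : finType) (e : rel T)
    (e_sym : symmetric e) (e_irr : irreflexive e) (T_ne : (0 < #|T|)%N) :
  (forall v : T, b_chrom_r e [set~ v] + 2 = b_chrom_r e setT + #|T|./2)
  <->
  [\/ is_P2 e \/ is_C3 e,
      (forall x y : T, ~~ e x y) /\ (4 <= #|T| <= 5)%N
    | (4 <= #|T| <= 5)%N /\
      (exists x y u w : T,
         [/\ e x y, e u w & [disjoint [set x; y] & [set u; w]]]) /\
      ~ (exists S : {set T}, is_b_atom e 3 S)].
Proof.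
have HA : (exists S : {set T}, is_b_atom e 3 S) <-> 3 <= b_chrom_r e setT.
  rewrite atom3P (bchromr_geP _ _ (isT : 0 < 3)).
  by split; case=> S H; exists S; [split => //; apply: subsetT | apply H].
have [v0 _] : exists v0 : T, v0 \in T by apply/card_gt0P.
have mono v : b_chrom_r e [set~ v] <= b_chrom_r e setT by apply: bchromr_mono; apply: subsetT.
have RHSn : (#|T| < 2 \/ 5 < #|T|) -> ~ [\/ is_P2 e \/ is_C3 e,
      (forall x y : T, ~~ e x y) /\ (4 <= #|T| <= 5)
    | (4 <= #|T| <= 5) /\
      (exists x y u w : T,
         [/\ e x y, e u w & [disjoint [set x; y] & [set u; w]]]) /\
      ~ (exists S : {set T}, is_b_atom e 3 S)].
  move=> Hn; case=> [[[c2 _] | [c3 _]] | [_ r] | [r _]]; lia.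
have [n2|n2] := boolP (#|T| < 2).
  split => [H | HR]; last by case: (RHSn (or_introl n2) HR).
  exfalso.
  have := H v0; have := bchromr_le_card e [set~ v0]; have := bchromr_le_card e setT.
  rewrite cardsC1 cardsT; lia.
have [n5|n5] := boolP (5 < #|T|).
  split => [H | HR]; last by case: (RHSn (or_intror n5) HR).
  exfalso.
  by have := H v0; have := mono v0; lia.
(* 2 <= #|T| <= 5 : transport to 'I_#|T| and compute *)
pose f := @enum_val T (pred_of_simpl predT).
pose g := @enum_rank T.
have fK : cancel f g by apply: enum_valK.
have gK : cancel g f by apply: enum_rankK.
have [bits [sb Hb]] := bits_ok e_sym e_irr f.
set adj := adjm (mat #|T| bits).
have ee : forall x y, @eI adj #|T| x y = e (f x) (f y) by move=> x y; apply: Hb.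
have Hc : check adj #|T| = true.
  have := check_all_ok (n := #|T|); rewrite leqNgt (negbTE n2) leqNgt (negbTE n5) => /(_ isT) /allP.
  by apply; rewrite allmasksP sb.
have := check_bridge Hc.
have BT A : b_chrom_r e A = b_chrom_r (@eI adj #|T|) (f @^-1: A).
  exact: (bchromr_transfer fK gK ee).
have preT : f @^-1: [set: T] = [set: 'I_#|T|] by apply/setP => x; rewrite !inE.
have preC v : f @^-1: [set~ v] = [set~ g v].
  by apply/setP => x; rewrite !inE (can2_eq fK gK).
move=> [H1 H2]; split.
- move=> H.
  have HI : forall v' : 'I_#|T|, b_chrom_r (@eI adj #|T|) [set~ v'] + 2 =
      b_chrom_r (@eI adj #|T|) setT + #|T|./2.
    by move=> v'; have := H (f v'); rewrite !BT preT preC fK.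
  case: (H1 HI) => [[HP|HC] | [He r] | [r [Hd Hb3]]].
  + by apply: Or31; left; apply/(P2_transfer fK gK ee).
  + by apply: Or31; right; apply/(C3_transfer fK gK ee).
  + by apply: Or32; split => //; apply: (edgeless_transfer gK ee).2 He.
  + apply: Or33; split => //; split; first by apply/(disj_transfer fK gK ee).
    by move/HA; rewrite BT preT leqNgt Hb3.
- move=> HR v; rewrite !BT preT preC; apply: H2 => //.
  case: HR => [[/(P2_transfer fK gK ee) ? | /(C3_transfer fK gK ee) ?] | [He r] | [r [Hd Hn]]].
  + by apply: Or31; left.
  + by apply: Or31; right.
  + by apply: Or32; split => //; apply: (edgeless_transfer gK ee).1 He.
  + apply: Or33; split => //; split; first by apply/(disj_transfer fK gK ee).
    by rewrite -preT -BT ltnNge; apply/negP => /HA.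
Qed.

Import GRing.Theory Num.Theory.
Local Open Scope ring_scope.

Theorem mainTheorem14 (T : finType) (e : rel T)
    (e_sym : symmetric e) (e_irr : irreflexive e) (T_ne : (0 < #|T|)%N) :
  (forall v : T,
     (b_chrom_r e [set~ v])%:Z
       = (b_chrom_r e [set: T])%:Z + (#|T| %/ 2)%N%:Z - 2)
  <->
  [\/ is_P2 e \/ is_C3 e,
      (forall x y : T, ~~ e x y) /\ (4 <= #|T| <= 5)%N
    | (4 <= #|T| <= 5)%N /\
      (exists x y u w : T,
         [/\ e x y, e u w & [disjoint [set x; y] & [set u; w]]]) /\
      ~ (exists S : {set T}, is_b_atom e 3 S)].
Proof.
apply: iff_trans (main_nat e_sym e_irr T_ne).
by split => H v; move: (H v); rewrite -divn2; lia.
Qed.
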